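(* Consider the distributed detection model in the context with $N\ge 2$, and let $m=\frac{N}{2N-2}$. Suppose the fusion center uses the majority rule $K^*=\lceil\frac{N+1}{2}\rceil$ and that $\alpha<\min\{0.5-P_f,\;1-m/P_d\}$. Then the maximum of the error probability $P_E$ over $(P_{1,0},P_{0,1})\in[0,1]^2$ is attained at one of the attacking strategies $(P_{1,0},P_{0,1})=(1,0)$, $(0,1)$, or $(1,1)$.
   Context: Binary hypothesis test between $H_0$ and $H_1$ with priors $P_0,P_1\in(0,1)$, $P_0+P_1=1$. There are $N$ sensors; conditionally on the hypothesis, their local decisions $v_i\in\{0,1\}$ are i.i.d. with $P(v_i=1\mid H_1)=P_d$, $P(v_i=1\mid H_0)=P_f$, where $0<P_f<P_d<1$. Each sensor independently is Byzantine with probability $\alpha\in[0,1]$. Honest nodes send $u_i=v_i$; a Byzantine node sends $u_i=1$ with probability $P_{1,0}$ when $v_i=0$ and sends $u_i=0$ with probability $P_{0,1}$ when $v_i=1$. Hence conditionally on $H_j$ the $u_i$ are i.i.d. with $P(u_i=1\mid H_0)=\pi_{1,0}=\alpha(P_{1,0}(1-P_f)+(1-P_{0,1})P_f)+(1-\alpha)P_f$ and $P(u_i=1\mid H_1)=\pi_{1,1}=\alpha(P_{1,0}(1-P_d)+(1-P_{0,1})P_d)+(1-\alpha)P_d$. A $K$-out-of-$N$ fusion rule decides $H_1$ iff at least $K$ of the $u_i$ equal $1$; its global false alarm and detection probabilities are $Q_F=\sum_{i=K}^N\binom{N}{i}\pi_{1,0}^i(1-\pi_{1,0})^{N-i}$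 and $Q_D=\sum_{i=K}^N\binom{N}{i}\pi_{1,1}^i(1-\pi_{1,1})^{N-i}$, and its error probability is $P_E=P_0Q_F+P_1(1-Q_D)$, viewed as a function of $(P_{1,0},P_{0,1})$ for fixed $\alpha$ and $K$. *)

(* Defs.v *)
From mathcomp Require Import all_boot all_order all_algebra.
From mathcomp Require Import reals.
Set Implicit Arguments. Unset Strict Implicit. Unset Printing Implicit Defensive.
Import Order.TTheory GRing.Theory Num.Theory.
Local Open Scope ring_scope.

Section DD.
Variable R : realFieldType.

(* P(u_i = 1 | H_0) *)
Definition pi10 (alpha Pf P10 P01 : R) : R :=
  alpha * (P10 * (1 - Pf) + (1 - P01) * Pf) + (1 - alpha) * Pf.

(* P(u_i = 1 | H_1) *)
Definition pi11 (alpha Pd P10 P01 : R) : R :=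
  alpha * (P10 * (1 - Pd) + (1 - P01) * Pd) + (1 - alpha) * Pd.

Definition tail_binom (N K : nat) (p : R) : R :=
  \sum_(K <= i < N.+1) ('C(N, i))%:R * p ^+ i * (1 - p) ^+ (N - i).

Definition QF (N K : nat) (alpha Pf P10 P01 : R) : R :=
  tail_binom N K (pi10 alpha Pf P10 P01).

Definition QD (N K : nat) (alpha Pd P10 P01 : R) : R :=
  tail_binom N K (pi11 alpha Pd P10 P01).

Definition PE (N K : nat) (P0 P1 alpha Pf Pd P10 P01 : R) : R :=
  P0 * QF N K alpha Pf P10 P01 + P1 * (1 - QD N K alpha Pd P10 P01).

End DD.

(* majority rule K* = ceil((N+1)/2), which equals floor((N+2)/2) *)
Definition Kstar (N : nat) : nat := (N.+2)./2.

(* Main.v *)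
Require Import Defs.
From mathcomp Require Import all_boot all_order all_algebra.
From mathcomp Require Import reals.
From mathcomp Require Import ring lra polyrcf zify.
Import Order.TTheory GRing.Theory Num.Theory.
Local Open Scope ring_scope.
Section S.
Variable R : comNzRingType.
Definition Bp (n i : nat) : {poly R} := ('X^i * (1 - 'X) ^+ (n - i)) *+ 'C(n, i).

Lemma derivBp (n i : nat) : (0 < i)%N -> (i <= n.+1)%N ->
  (Bp n.+1 i)^`() = (Bp n i.-1 - Bp n i) *+ n.+1.
Proof.
case: i => // i _; rewrite ltnS => hi /=.
rewrite /Bp subSS derivMn derivM derivXn /= deriv_exp derivB derivC derivX sub0r.
have H1 : ('C(n.+1, i.+1) * i.+1 = n.+1 * 'C(n, i))%N by rewrite mulnC -mul_bin_diag.
have H2 : ('C(n.+1, i.+1) * (n - i) = n.+1 * 'C(n, i.+1))%N by rewrite mulnC (mul_bin_down n.+1 i.+1).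
move: H1 H2; case E: (n - i)%N => [|l] H1 H2.
  have -> : i = n by apply/eqP; rewrite eqn_leq hi /= -subn_eq0 E.
  rewrite (bin_small (ltnSn n)) !binn !expr0 !mulr1 !mulr0n mulr0 addr0 subr0 -mulrnA mulnC.
  by rewrite mul1n mulr1n.
have El : (n - i.+1)%N = l by rewrite subnS E.
rewrite El /=.
have H1' : ('C(n.+1, i.+1)%:R * (i.+1)%:R : {poly R}) = (n.+1)%:R * ('C(n, i))%:R by rewrite -!natrM H1.
have H2' : ('C(n.+1, i.+1)%:R * (l.+1)%:R : {poly R}) = (n.+1)%:R * ('C(n, i.+1))%:R by rewrite -!natrM H2.
apply/eqP; rewrite -subr_eq0; apply/eqP.
transitivity ((('X^i : {poly R}) * (1 - 'X)^+l.+1) * ('C(n.+1, i.+1)%:R * (i.+1)%:R - (n.+1)%:R * ('C(n, i))%:R)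
  - (('X^i : {poly R}) * 'X * (1 - 'X)^+l) * ('C(n.+1, i.+1)%:R * (l.+1)%:R - (n.+1)%:R * ('C(n, i.+1))%:R)).
  rewrite !exprSr /=; set A := 'X^i; set B := (1 - 'X) ^+ l; ring.
by rewrite H1' H2' !subrr !mulr0 subrr.
Qed.
End S.

Section T.
Variable R : realType.

Definition Tp (N K : nat) : {poly R} := \sum_(K <= i < N.+1) Bp R N i.

Lemma hornerBp n i (z : R) : (Bp R n i).[z] = (z ^+ i * (1 - z) ^+ (n - i)) *+ 'C(n, i).
Proof. by rewrite /Bp hornerMn !hornerE. Qed.

Lemma hornerTp N K (z : R) : (Tp N K).[z] = tail_binom N K z.
Proof.
rewrite /Tp /tail_binom horner_sum; apply: eq_bigr => i _.
by rewrite hornerBp -mulr_natl mulrA.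
Qed.

Lemma derivTp n K : (0 < K)%N -> (K <= n.+1)%N -> (Tp n.+1 K)^`() = Bp R n K.-1 *+ n.+1.
Proof.
move=> K0 Kn; have [j Ej] : exists j, n.+1 = (K + j)%N by exists (n.+1 - K)%N; rewrite subnKC.
elim: j K K0 Kn Ej => [|j IH] K K0 Kn Ej.
  rewrite addn0 in Ej; rewrite /Tp -Ej big_nat1 derivBp //.
  by rewrite /Bp (bin_small (ltnSn n)) mulr0n subr0.
rewrite /Tp big_ltn; last by rewrite Ej ltnS leq_addr.
rewrite derivD derivBp // -/(Tp n.+1 K.+1) IH //; last by rewrite Ej -addSnnS.
  by rewrite -mulrnDl subrK.
by rewrite Ej -addSnnS leq_addr.
Qed.

Lemma hornerdBp n k (z : R) : (0 < k)%N -> (k < n)%N ->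
  ((Bp R n k)^`()).[z] = ('C(n, k))%:R * z ^+ k.-1 * (1 - z) ^+ (n - k).-1 *
       (k%:R * (1 - z) - (n - k)%:R * z).
Proof.
case: k => // k _ kn; case E: (n - k.+1)%N => [|l]; first by move: kn; rewrite -subn_gt0 E.
rewrite /Bp E derivMn derivM derivXn deriv_exp derivB derivC derivX sub0r /=.
rewrite !(hornerMn, hornerE) /=; set A := z ^+ k; set B := (1 - z) ^+ l.
rewrite !exprS -/A -/B; ring.
Qed.

End T.

Section U.
Variable R : realType.

Lemma maxpoly (G : {poly R}) : (forall x, 0 < x < 1 -> 0 <= (G^`()^`()).[x]) ->
  forall t, 0 <= t <= 1 -> G.[t] <= Num.max G.[0] G.[1].
Proof.
move=> H t /andP[t0 t1].
have mono : {in `[0, 1] &, {homo horner G^`() : x y / x <= y}}.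
  apply: ler_hornerW => x; rewrite in_itv /= => hx; exact: H.
have tin : t \in `[0, 1] by rewrite in_itv /= t0 t1.
case: (lerP 0 G^`().[t]) => h.
  have : G.[t] <= G.[1].
    apply: (@ler_hornerW _ t 1 G) => //; last by rewrite in_itv /= t1 lexx.
      move=> x; rewrite in_itv /= => /andP[tx x1]; apply: (le_trans h); apply: mono => //.
        by rewrite in_itv /= (le_trans t0 (ltW tx)) (ltW x1).
      exact: ltW.
    by rewrite in_itv /= lexx t1.
  by move=> ?; rewrite le_max; apply/orP; right.
have : (- G).[0] <= (- G).[t].
  apply: (@ler_hornerW _ 0 t (- G)) => //; last by rewrite in_itv /= t0 lexx.
    move=> x; rewrite in_itv /= => /andP[x0 xt]; rewrite derivN hornerN oppr_ge0.
    apply: ltW; apply: (le_lt_trans _ h); apply: mono => //; last exact: ltW.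
    by rewrite in_itv /= (ltW x0) (le_trans (ltW xt) t1).
  by rewrite in_itv /= lexx t0.
by rewrite !hornerN lerN2 => ?; rewrite le_max; apply/orP; left.
Qed.
End U.

Lemma kfacts n : ((n.+1)./2 + (n.+1)./2 = n.+1 \/ (n.+1)./2 + (n.+1)./2 = n)%N.
Proof. have := odd_double_half n.+1; rewrite -addnn; case: (odd n.+1) => /=; lia. Qed.

Section V.
Variable R : realType.

Lemma Dsign n (z : R) : (2 <= n)%N ->
 (0 <= z -> z <= 1 / 2 -> 0 <= (Bp R n (Kstar n.+1).-1)^`().[z]) /\
 ((n.+1)%:R <= 2 * n%:R * z -> z <= 1 -> (Bp R n (Kstar n.+1).-1)^`().[z] <= 0).
Proof.
move=> n2; rewrite /Kstar /=; set k := (n.+1)./2.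
have hk := kfacts n; rewrite -/k in hk.
have k0 : (0 < k)%N by lia.
have kn : (k < n)%N by lia.
rewrite hornerdBp // natrB ?(ltnW kn) //.
have hk' : (k%:R + k%:R = (n%:R + 1 : R)) \/ (k%:R + k%:R = (n%:R : R)).
  by case: hk => e; [left|right]; rewrite -natrD e ?natr1.
have n0 : (2 : R) <= n%:R by rewrite (ler_nat R 2 n).
split.
  move=> z0 z1; apply: mulr_ge0.
    have z1' : z <= 1 by lra.
    by rewrite !mulr_ge0 ?exprn_ge0 ?ler0n ?subr_ge0.
  case: hk' => e; nra.
move=> hz z1.
have z0 : 0 <= z by nra.
rewrite -oppr_ge0 -mulrN; apply: mulr_ge0.
  by rewrite !mulr_ge0 ?exprn_ge0 ?ler0n ?subr_ge0.
case: hk' => e; nra.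
Qed.

Lemma line (n : nat) (P0 P1 a b c d : R) : (2 <= n)%N -> 0 <= P0 -> 0 <= P1 ->
 (forall t, 0 <= t <= 1 -> [/\ 0 <= a + t * b, a + t * b <= 1 / 2,
      (n.+1)%:R <= 2 * n%:R * (c + t * d) & c + t * d <= 1]) ->
 forall t, 0 <= t <= 1 ->
   P0 * tail_binom n.+1 (Kstar n.+1) (a + t * b) + P1 * (1 - tail_binom n.+1 (Kstar n.+1) (c + t * d))
   <= Num.max (P0 * tail_binom n.+1 (Kstar n.+1) (a + 0 * b) + P1 * (1 - tail_binom n.+1 (Kstar n.+1) (c + 0 * d)))
              (P0 * tail_binom n.+1 (Kstar n.+1) (a + 1 * b) + P1 * (1 - tail_binom n.+1 (Kstar n.+1) (c + 1 * d))).
Proof.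
move=> n2 P00 P10 Hr.
set K := Kstar n.+1.
pose G : {poly R} := P0%:P * (Tp R n.+1 K \Po (a%:P + b *: 'X)) + P1%:P * (1 - Tp R n.+1 K \Po (c%:P + d *: 'X)).
have hG : forall t, G.[t] = P0 * tail_binom n.+1 K (a + t * b) + P1 * (1 - tail_binom n.+1 K (c + t * d)).
  by move=> t; rewrite /G !(hornerE, horner_comp, hornerTp) [b * t]mulrC [d * t]mulrC.
move=> t ht; rewrite -!hG; apply: maxpoly => // x hx.
have K0 : (0 < K)%N by [].
have Kn : (K <= n.+1)%N by rewrite /K /Kstar /= ltnS; have := kfacts n; lia.
rewrite /G !(derivD, derivM, derivC, derivB, derivN, deriv_comp, derivZ, derivX, (@derivTp R n K K0 Kn)).
have x01 : 0 <= x <= 1 by case/andP: hx => h1 h2; rewrite !ltW.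
have [hx1 hx2 hx3 hx4] := Hr x x01.
have s1 := (@Dsign n (a + x * b) n2).1 hx1 hx2.
have s2 := (@Dsign n (c + x * d) n2).2 hx3 hx4.
rewrite [x * b]mulrC in s1; rewrite [x * d]mulrC in s2.
move: s1 s2; rewrite -/K; move: (Bp R n K.-1) => D s1 s2.
rewrite !(derivD, derivM, derivC, derivB, derivN, deriv_comp, derivZ, derivX, derivMn).
rewrite !(hornerE, horner_comp, hornerMn) /= !mulr1 !mulr0 !addr0.
apply: addr_ge0; apply: mulr_ge0 => //.
  by rewrite !mulrnAl mulrn_wge0 // -mulrA mulr_ge0 // -expr2 sqr_ge0.
rewrite !mulNr !mulrnAl oppr_ge0 -mulrA; apply: mulrn_wle0; by rewrite mulr_le0_ge0 // -expr2 sqr_ge0.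
Qed.
End V.

Section W.
Variable R : realType.

Lemma tail_mono n (u v : R) : (2 <= n)%N -> 0 <= u -> u <= v -> v <= 1 ->
  tail_binom n.+1 (Kstar n.+1) u <= tail_binom n.+1 (Kstar n.+1) v.
Proof.
move=> n2 u0 uv v1; rewrite -!hornerTp.
have K0 : (0 < Kstar n.+1)%N by [].
have Kn : (Kstar n.+1 <= n.+1)%N by rewrite /Kstar /= ltnS; have := kfacts n; lia.
apply: (@ler_hornerW _ 0 1) => //.
- move=> x; rewrite in_itv /= => /andP[x0 x1].
  rewrite derivTp // hornerMn hornerBp mulrn_wge0 // mulrn_wge0 // mulr_ge0 // exprn_ge0 //.
    exact: ltW.
  by rewrite subr_ge0 ltW.
- by rewrite in_itv /= u0 (le_trans uv v1).
- by rewrite in_itv /= v1 (le_trans u0 uv).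
Qed.

Lemma PE_test N K P0 P1 alpha Pf Pd x y : PE N K P0 P1 alpha Pf Pd x y =
   P0 * tail_binom N K (pi10 alpha Pf x y) + P1 * (1 - tail_binom N K (pi11 alpha Pd x y)) :> R.
Proof. by []. Qed.


End W.

Theorem theorem2 (R : realType) (N : nat) (P0 P1 Pf Pd alpha : R) :
  (2 <= N)%N ->
  0 < P0 < 1 -> 0 < P1 < 1 -> P0 + P1 = 1 ->
  0 < Pf -> Pf < Pd -> Pd < 1 ->
  0 <= alpha <= 1 ->
  alpha < Num.min (1 / 2 - Pf) (1 - (N%:R / (2 * N%:R - 2)) / Pd) ->
  exists s : R * R,
    [\/ s = (1, 0), s = (0, 1) | s = (1, 1)] /\
    forall P10 P01 : R, 0 <= P10 <= 1 -> 0 <= P01 <= 1 ->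
      PE N (Kstar N) P0 P1 alpha Pf Pd P10 P01
        <= PE N (Kstar N) P0 P1 alpha Pf Pd s.1 s.2.
Proof.
move=> N2 /andP[P00 P01'] /andP[P10 P11'] P01s Pf0 PfPd Pd1 /andP[a0 a1].
rewrite lt_min => /andP[ha1 ha2].
case: N N2 ha2 => [|n] //; rewrite ltnS => n1 ha2.
have Pd0 : 0 < Pd by exact: lt_trans Pf0 PfPd.
have n2 : (2 <= n)%N.
  case: n n1 ha2 => [|[|n]] // _ ha2; exfalso.
  have m1 : (2 : R) / (2 * 2 - 2) = 1 by field.
  rewrite m1 in ha2.
  have : 1 / Pd > 1 by rewrite ltr_pdivlMr // mul1r.
  lra.
set m := (n.+1)%:R / (2 * (n.+1)%:R - 2) : R in ha2.
have e2 : 2 * (n.+1)%:R - 2 = 2 * n%:R :> R by rewrite -natr1; ring.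
have hm : m / Pd < 1 - alpha by lra.
rewrite ltr_pdivrMr // in hm.
have nR : (2 : R) <= n%:R by rewrite (ler_nat R 2 n).
have n0 : (n%:R : R) != 0 by rewrite pnatr_eq0 -lt0n (leq_trans _ n2).
have mE : m * (2 * n%:R) = (n.+1)%:R by rewrite /m e2 divfK // mulf_neq0 // pnatr_eq0.
have range : forall x y : R, 0 <= x <= 1 -> 0 <= y <= 1 ->
   [/\ 0 <= pi10 alpha Pf x y, pi10 alpha Pf x y <= 1 / 2,
       (n.+1)%:R <= 2 * n%:R * pi11 alpha Pd x y & pi11 alpha Pd x y <= 1].
  move=> x y /andP[x0 x1] /andP[y0 y1]; rewrite /pi10 /pi11.
  have hpi : (1 - alpha) * Pd <= alpha * (x * (1 - Pd) + (1 - y) * Pd) + (1 - alpha) * Pd.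
    rewrite lerDr; apply: mulr_ge0 => //; apply: addr_ge0; apply: mulr_ge0; lra.
  split.
  - apply: addr_ge0; apply: mulr_ge0 => //; try lra.
    apply: addr_ge0; apply: mulr_ge0; lra.
  - have : alpha * (x * (1 - Pf) + (1 - y) * Pf) <= alpha.
      rewrite -[X in _ <= X]mulr1; apply: ler_wpM2l => //; nra.
    nra.
  - rewrite -mE [m * _]mulrC ler_pM2l; last lra.
    lra.
  - have : alpha * (x * (1 - Pd) + (1 - y) * Pd) <= alpha.
      rewrite -[X in _ <= X]mulr1; apply: ler_wpM2l => //; nra.
    nra.
set F := fun x y => PE n.+1 (Kstar n.+1) P0 P1 alpha Pf Pd x y.
have seg : forall x0 y0 x1 y1 t x y, 0 <= x0 <= 1 -> 0 <= y0 <= 1 -> 0 <= x1 <= 1 -> 0 <= y1 <= 1 ->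
    0 <= t <= 1 -> x = x0 + t * (x1 - x0) -> y = y0 + t * (y1 - y0) ->
    F x y <= Num.max (F x0 y0) (F x1 y1).
  move=> x0 y0 x1 y1 t x y hx0 hy0 hx1 hy1 ht -> ->.
  have aff10 : forall s, pi10 alpha Pf (x0 + s * (x1 - x0)) (y0 + s * (y1 - y0)) =
      pi10 alpha Pf x0 y0 + s * (pi10 alpha Pf x1 y1 - pi10 alpha Pf x0 y0).
    by move=> s; rewrite /pi10; ring.
  have aff11 : forall s, pi11 alpha Pd (x0 + s * (x1 - x0)) (y0 + s * (y1 - y0)) =
      pi11 alpha Pd x0 y0 + s * (pi11 alpha Pd x1 y1 - pi11 alpha Pd x0 y0).
    by move=> s; rewrite /pi11; ring.
  have inside : forall s, 0 <= s <= 1 -> 0 <= x0 + s * (x1 - x0) <= 1 /\ 0 <= y0 + s * (y1 - y0) <= 1.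
    move=> s /andP[s0 s1]; move: hx0 hy0 hx1 hy1 => /andP[? ?] /andP[? ?] /andP[? ?] /andP[? ?].
    split; apply/andP; split; nra.
  rewrite /F !PE_test aff10 aff11.
  have := @line R n P0 P1 (pi10 alpha Pf x0 y0) (pi10 alpha Pf x1 y1 - pi10 alpha Pf x0 y0)
     (pi11 alpha Pd x0 y0) (pi11 alpha Pd x1 y1 - pi11 alpha Pd x0 y0) n2 (ltW P00) (ltW P10).
  rewrite !mul0r !mul1r !addr0 !subrKC; apply => //.
  move=> s hs; have [h1 h2] := inside s hs; rewrite -aff10 -aff11.
  by have := range _ _ h1 h2; rewrite mul1r.
have i0 : 0 <= (0 : R) <= 1 by apply/andP; split; [exact: lexx | exact: ler01].
have i1 : 0 <= (1 : R) <= 1 by apply/andP; split; [exact: ler01 | exact: lexx].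
set v10 := F 1 0; set v01 := F 0 1; set v11 := F 1 1.
have main : forall x y, 0 <= x <= 1 -> 0 <= y <= 1 -> F x y <= Num.max v10 (Num.max v01 v11).
  move=> x y hx hy.
  have h1 : F x y <= Num.max (F 0 y) (F 1 y) by apply: (seg 0 y 1 y x) => //; ring.
  have h2 : F 0 y <= Num.max (F 0 0) v01 by apply: (seg 0 0 0 1 y) => //; ring.
  have h3 : F 1 y <= Num.max v10 v11 by apply: (seg 1 0 1 1 y) => //; ring.
  have hPd : 0 <= Pd <= 1 by rewrite !ltW.
  have hPd' : 0 <= 1 - Pd <= 1 by apply/andP; split; lra.
  have h4 : F Pd (1 - Pd) <= Num.max v10 v01 by apply: (seg 1 0 0 1 (1 - Pd)) => //; ring.
  have h5 : F 0 0 <= F Pd (1 - Pd).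
    rewrite /F !PE_test.
    have -> : pi11 alpha Pd Pd (1 - Pd) = pi11 alpha Pd 0 0 by rewrite /pi11; ring.
    rewrite lerD2r; apply: ler_wpM2l; first exact: ltW.
    have [r1 r2 _ _] := range 0 0 i0 i0.
    have [r3 r4 _ _] := range Pd (1 - Pd) hPd hPd'.
    apply: tail_mono => //; last lra.
    rewrite /pi10; nra.
  have hM10 : v10 <= Num.max v10 (Num.max v01 v11) by rewrite le_max lexx.
  have hM01 : v01 <= Num.max v10 (Num.max v01 v11) by rewrite le_max le_max lexx orbT.
  have hM11 : v11 <= Num.max v10 (Num.max v01 v11) by rewrite le_max le_max lexx !orbT.
  apply: (le_trans h1); rewrite ge_max; apply/andP; split.
    apply: (le_trans h2); rewrite ge_max hM01 andbT.
    apply: (le_trans h5); apply: (le_trans h4); by rewrite ge_max hM10 hM01.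
  by apply: (le_trans h3); rewrite ge_max hM10 hM11.
have [s [Hs HM]] : exists s : R * R, [\/ s = (1, 0), s = (0, 1) | s = (1, 1)] /\
    Num.max v10 (Num.max v01 v11) <= F s.1 s.2.
  case: (leP v01 v11) => h.
    case: (leP v10 v11) => h'.
      exists (1, 1); split; [by apply: Or33|]; by rewrite /= lexx.
    exists (1, 0); split; [by apply: Or31|]; by rewrite /= lexx.
  case: (leP v10 v01) => h'.
    exists (0, 1); split; [by apply: Or32|]; by rewrite /= lexx.
  exists (1, 0); split; [by apply: Or31|]; by rewrite /= lexx.
exists s; split => // x y hx hy.
exact: le_trans (main x y hx hy) HM.
Qed.
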